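(* A variety of Ockham algebras is a discriminator variety if and only if it is generated by a finite set $\mathcal B$ of Ockham algebras such that, for each $\mathbf A\in\mathcal B$, $D(\mathbf A)\cong\mathbb C_m$ for some odd $m\in\mathbb N$.
   Context: An Ockham algebra is an algebra $\langle O;\vee,\wedge,g,0,1\rangle$ where $\langle O;\vee,\wedge,0,1\rangle$ is a bounded distributive lattice and $g$ is a dual endomorphism of it. An Ockham space is a Priestley space with a continuous order-reversing self-map $g$; isomorphisms are order- and topology-isomorphisms commuting with $g$. For an Ockham algebra $\mathbf A$, $D(\mathbf A)$ is the set of bounded-lattice homomorphisms $x$ from the lattice reduct of $\mathbf A$ to $\mathbf 2$, ordered pointwise, topology from $\{0,1\}^A$, with $g^{D(\mathbf A)}(x)=c\circ x\circ g^{\mathbf A}$, $c$ the Boolean complement on $\{0,1\}$. For $m\in\mathbb N$, $\mathbb C_m$ is the Ockham space on $\{0,1,\dots,m-1\}$ with discrete topology, the order an antichain, and $g(i)=i+1 \pmod m$. A variety is a discriminator variety if some ternary term induces, on every subdirectly irreducible member, the ternary discriminator $\tau(x,y,z)=x$ if $x\ne y$, $=z$ if $x=y$. *)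

(* Defs.v *)
From Stdlib Require List.
From mathcomp Require Import all_boot.
Set Implicit Arguments.
Unset Strict Implicit.
Unset Printing Implicit Defensive.

Record ockham := Ockham {
  carrier :> Type;
  ojoin : carrier -> carrier -> carrier;
  omeet : carrier -> carrier -> carrier;
  og : carrier -> carrier;
  ozero : carrier;
  oone : carrier;
  ojoinC : forall x y, ojoin x y = ojoin y x;
  omeetC : forall x y, omeet x y = omeet y x;
  ojoinA : forall x y z, ojoin x (ojoin y z) = ojoin (ojoin x y) z;
  omeetA : forall x y z, omeet x (omeet y z) = omeet (omeet x y) z;
  ojoin_absorb : forall x y, ojoin x (omeet x y) = x;
  omeet_absorb : forall x y, omeet x (ojoin x y) = x;
  omeet_distr : forall x y z, omeet x (ojoin y z) = ojoin (omeet x y) (omeet x z);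
  ojoin0 : forall x, ojoin x ozero = x;
  omeet1 : forall x, omeet x oone = x;
  og_join : forall x y, og (ojoin x y) = omeet (og x) (og y);
  og_meet : forall x y, og (omeet x y) = ojoin (og x) (og y);
  og0 : og ozero = oone;
  og1 : og oone = ozero
}.

Inductive term :=
  | tvar of nat
  | tjoin of term & term
  | tmeet of term & term
  | tg of term
  | tzero
  | tone.

Fixpoint teval (A : ockham) (v : nat -> A) (t : term) : A :=
  match t with
  | tvar i => v i
  | tjoin s u => ojoin (teval v s) (teval v u)
  | tmeet s u => omeet (teval v s) (teval v u)
  | tg s => og (teval v s)
  | tzero => ozero A
  | tone => oone A
  end.

Fixpoint tvars_lt (n : nat) (t : term) : Prop :=
  match t with
  | tvar i => i < n
  | tjoin s u | tmeet s u => tvars_lt n s /\ tvars_lt n u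
  | tg s => tvars_lt n s
  | tzero | tone => True
  end.

Definition satisfies (A : ockham) (s u : term) : Prop :=
  forall v : nat -> A, teval v s = teval v u.

Definition in_variety (E : term -> term -> Prop) (A : ockham) : Prop :=
  forall s u, E s u -> satisfies A s u.

Definition theory (B : seq ockham) : term -> term -> Prop :=
  fun s u => forall A, List.In A B -> satisfies A s u.

(* The variety defined by E is generated by B: it equals Mod(Th(B)) = HSP(B). *)
Definition generated_by (E : term -> term -> Prop) (B : seq ockham) : Prop :=
  forall A : ockham, in_variety E A <-> in_variety (theory B) A.

Definition congruence (A : ockham) (th : A -> A -> Prop) : Prop :=
  [/\ (forall x, th x x),
      (forall x y, th x y -> th y x) /\
      (forall x y z, th x y -> th y z -> th x z),
      (forall x y x' y', th x x' -> th y y' -> th (ojoin x y) (ojoin x' y')),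
      (forall x y x' y', th x x' -> th y y' -> th (omeet x y) (omeet x' y'))
    & (forall x x', th x x' -> th (og x) (og x'))].

Definition subdirectly_irreducible (A : ockham) : Prop :=
  exists a b : A, a <> b /\
    forall th, congruence th -> (exists x y, th x y /\ x <> y) -> th a b.

Definition assign3 (A : ockham) (x y z : A) : nat -> A :=
  fun i => match i with 0 => x | 1 => y | _ => z end.

Definition induces_discriminator (A : ockham) (t : term) : Prop :=
  forall x y z : A,
    (x <> y -> teval (assign3 x y z) t = x) /\
    (x = y -> teval (assign3 x y z) t = z).

Definition discriminator_variety (E : term -> term -> Prop) : Prop :=
  exists t : term, tvars_lt 3 t /\
    forall A : ockham, in_variety E A -> subdirectly_irreducible A ->
      induces_discriminator A t.

(* elements of D(A): bounded-lattice homomorphisms A -> 2 *)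
Definition in_dual (A : ockham) (x : A -> bool) : Prop :=
  [/\ (forall a b, x (ojoin a b) = x a || x b),
      (forall a b, x (omeet a b) = x a && x b),
      x (ozero A) = false
    & x (oone A) = true].

Definition dual_g (A : ockham) (x : A -> bool) : A -> bool :=
  fun a => ~~ x (og a).

(* phi : D(A) -> C_m is an isomorphism of Ockham spaces, where C_m has carrier
   'I_m, discrete topology, antichain order and g(i) = i+1 mod m.
   D(A) carries the pointwise order and the subspace topology of {0,1}^A,
   whose basic open neighbourhoods of x are the sets of y agreeing with x
   on a finite set s of elements of A. *)
Definition dual_iso_Cm (A : ockham) (m : nat) (phi : (A -> bool) -> 'I_m) : Prop :=
  [/\
      (forall x y, in_dual x -> in_dual y -> phi x = phi y -> forall a, x a = y a),
      (forall i : 'I_m, exists2 x, in_dual x & phi x = i),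
      (forall x y, in_dual x -> in_dual y ->
         ((forall a, x a ==> y a) <-> phi x = phi y)),
      (* continuity of phi (continuity of phi^-1 is automatic, C_m discrete) *)
      (forall (i : 'I_m) x, in_dual x -> phi x = i ->
         exists s : seq A, forall y, in_dual y ->
           (forall a, List.In a s -> y a = x a) -> phi y = i)
    &
      (forall x, in_dual x -> (phi (dual_g x) : nat) = (phi x).+1 %% m)].

Definition dual_isomorphic_Cm (A : ockham) (m : nat) : Prop :=
  exists phi : (A -> bool) -> 'I_m, dual_iso_Cm phi.

(* Main.v *)
Require Import Defs.
From Stdlib Require List.
From mathcomp Require Import all_boot.
From mathcomp Require Import boolp classical_sets zify.
Set Implicit Arguments.
Unset Strict Implicit.
Unset Printing Implicit Defensive.

Section Lat.
Variable A : ockham.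
Implicit Types x y z : A.

Definition le x y := omeet x y = x.

Lemma omeetxx x : omeet x x = x.
Proof. by rewrite -{2}(ojoin_absorb x x) omeet_absorb. Qed.
Lemma omeet0x x : omeet (ozero A) x = ozero A.
Proof. by rewrite -{1}(ojoin0 x) ojoinC omeet_absorb. Qed.
Lemma omeetx0 x : omeet x (ozero A) = ozero A.
Proof. by rewrite omeetC omeet0x. Qed.
Lemma omeet1x x : omeet (oone A) x = x.
Proof. by rewrite omeetC omeet1. Qed.
Lemma ojoin0x x : ojoin (ozero A) x = x.
Proof. by rewrite ojoinC ojoin0. Qed.
Lemma ojoinx1 x : ojoin x (oone A) = oone A.
Proof. by rewrite -{1}(omeet1 x) omeetC ojoinC ojoin_absorb. Qed.
Lemma omeet_distl x y z : omeet (ojoin y z) x = ojoin (omeet y x) (omeet z x).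
Proof. by rewrite omeetC omeet_distr (omeetC x) (omeetC x). Qed.

Lemma le_refl x : le x x. Proof. exact: omeetxx. Qed.
Lemma le_trans x y z : le x y -> le y z -> le x z.
Proof. by rewrite /le => H1 H2; rewrite -H1 -omeetA H2. Qed.
Lemma le_meetl x y : le (omeet x y) x.
Proof. by rewrite /le omeetC omeetA omeetxx. Qed.
Lemma le_meetr x y : le (omeet x y) y.
Proof. by rewrite /le -omeetA omeetxx. Qed.
Lemma le_meet x y z : le z x -> le z y -> le z (omeet x y).
Proof. by rewrite /le => H1 H2; rewrite omeetA H1 H2. Qed.
Lemma le_join x y z : le x z -> le y z -> le (ojoin x y) z.
Proof. by rewrite /le => H1 H2; rewrite omeet_distl H1 H2. Qed.
Lemma le_joinl x y : le x (ojoin x y).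
Proof. exact: omeet_absorb. Qed.
Lemma le_joinr x y : le y (ojoin x y).
Proof. by rewrite ojoinC; apply: le_joinl. Qed.
Lemma le1 x : le x (oone A). Proof. exact: omeet1. Qed.
Lemma le0 x : le (ozero A) x. Proof. exact: omeet0x. Qed.
Lemma le_anti x y : le x y -> le y x -> x = y.
Proof. by rewrite /le => H1 H2; rewrite -H1 omeetC H2. Qed.
Lemma le_meet2 x x' y y' : le x x' -> le y y' -> le (omeet x y) (omeet x' y').
Proof.
move=> H1 H2; apply: le_meet; first exact: le_trans (le_meetl _ _) H1.
exact: le_trans (le_meetr _ _) H2.
Qed.

Lemma dual_mono (p : A -> bool) x y : in_dual p -> le x y -> p x -> p y.
Proof. by case=> _ Hm _ _ H; rewrite -H Hm => /andP[]. Qed.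

Lemma PIT (a b : A) : ~ le a b -> exists p, in_dual p /\ p a /\ ~~ p b.
Proof.
move=> nab.
pose FX (X : set A) := fun e => le a e \/ X e.
pose P (X : set A) := (forall x y, FX X x -> le x y -> FX X y) /\
   (forall x y, FX X x -> FX X y -> FX X (omeet x y)) /\ ~ FX X b.
have [M [PM Mmax]] : exists M, P M /\ (forall B, (M `<` B)%classic -> ~ P B).
  apply: Zorn_bigcup => C CP Ctot; split; [|split].
  - move=> x y [ax|[X CX Xx]] xy; first by left; exact: le_trans ax xy.
    have [H _] := CP X CX.
    by case: (H x y (or_intror Xx) xy) => ?; [left|right; exists X].
  - move=> x y Hx Hy.
    have [[ax ay]|] : (le a x /\ le a y) \/ exists2 X, C X & FX X x /\ FX X y.
      case: Hx => [ax|[X CX Xx]]; case: Hy => [ay|[Y CY Yy]].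
      + by left.
      + by right; exists Y => //; split; [left|right].
      + by right; exists X => //; split; [right|left].
      + have [XY|YX] := Ctot X Y CX CY.
        * by right; exists Y => //; split; right => //; apply: XY.
        * by right; exists X => //; split; right => //; apply: YX.
    + by left; apply: le_meet.
    + case=> X CX [HX HY]; have [_ [H _]] := CP X CX.
      by case: (H x y HX HY) => ?; [left|right; exists X].
  - case=> [//|[X CX Xb]]; have [_ [_ H]] := CP X CX; by apply: H; right.
pose F := FX M.
have [Fup [Fmeet Fb]] := PM.
have F1 : F (oone A) by left; exact: le1.
have Fprime : forall c e, F (ojoin c e) -> F c \/ F e.
  move=> c e Fce; apply: contrapT => /not_orP[nFc nFe].
  pose G c := fun x => exists f, F f /\ le (omeet f c) x.
  have Gb : forall c, ~ F c -> G c b.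
    move=> c0 nFc0; apply: contrapT => nGb.
    have PG : P (G c0).
      have FG : forall e, FX (G c0) e <-> G c0 e.
        move=> e0; split; last by right.
        case=> [ae|//]; exists e0; split; first by left.
        exact: le_meetl.
      split; [|split].
      + move=> x y /FG [f [Ff fx]] xy; apply/FG; exists f; split=> //.
        exact: le_trans xy.
      + move=> x y /FG [f [Ff fx]] /FG [f' [Ff' fy]]; apply/FG.
        exists (omeet f f'); split; first exact: Fmeet.
        apply: le_meet.
        * apply: le_trans fx; apply: le_meet2; [exact: le_meetl|exact: le_refl].
        * apply: le_trans fy; apply: le_meet2; [exact: le_meetr|exact: le_refl].
      + by move/FG.
    apply: (Mmax (G c0)) PG; split.
    * move=> x Mx; exists x; split; first by right.
      exact: le_meetl.
    * move=> GM; apply: nFc0; right; apply: GM; exists (oone A); split=> //.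
      exact: le_meetr.
  have [f1 [Ff1 H1]] := Gb c nFc.
  have [f2 [Ff2 H2]] := Gb e nFe.
  apply: Fb; apply: (Fup (omeet (omeet f1 f2) (ojoin c e))).
    by apply: (Fmeet) => //; apply: (Fmeet).
  rewrite omeet_distr; apply: le_join.
  + apply: le_trans H1; apply: le_meet2; [exact: le_meetl|exact: le_refl].
  + apply: le_trans H2; apply: le_meet2; [exact: le_meetr|exact: le_refl].
exists (fun e => `[< F e >]); split; [split|split].
- move=> x y; apply/asboolP/orP => [/Fprime [] H|[] /asboolP H].
  + by left; apply/asboolP.
  + by right; apply/asboolP.
  + by apply: Fup H _; apply: le_joinl.
  + by apply: Fup H _; apply: le_joinr.
- move=> x y; apply/asboolP/andP => [H|[/asboolP H1 /asboolP H2]].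
  + by split; apply/asboolP; apply: Fup H _; [apply: le_meetl|apply: le_meetr].
  + exact: Fmeet.
- apply/asboolP => H; apply: Fb; apply: Fup H _; exact: le0.
- by apply/asboolP.
- by apply/asboolP; left; exact: le_refl.
- by apply/asboolP.
Qed.

Lemma separate (a b : A) : (forall p, in_dual p -> p a = p b) -> a = b.
Proof.
move=> H.
have L : forall a b, (forall p, in_dual p -> p a = p b) -> le a b.
  move=> a0 b0 H0; apply: contrapT => /PIT [p [dp [pa pb]]].
  by move: pb; rewrite -(H0 p dp) pa.
apply: le_anti; apply: L => // p dp; by rewrite H.
Qed.

End Lat.

Section Pts.
Variable A : ockham.
Implicit Types (p q : A -> bool) (a b c : A).

Lemma in_dual_g p : in_dual p -> in_dual (dual_g p).
Proof.
case=> Hj Hm H0 H1; split=> [a b|a b||]; rewrite /dual_g.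
- by rewrite og_join Hm negb_and.
- by rewrite og_meet Hj negb_or.
- by rewrite og0 H1.
- by rewrite og1 H0.
Qed.

Lemma in_dual_iter n p : in_dual p -> in_dual (iter n (@dual_g A) p).
Proof. by move=> dp; elim: n => //= n IH; apply: in_dual_g. Qed.

Lemma pt_og p a : p (og a) = ~~ dual_g p a.
Proof. by rewrite /dual_g negbK. Qed.

Lemma pt_ogn n p a : p (iter n (@og A) a) = odd n (+) iter n (@dual_g A) p a.
Proof.
elim: n p => [|n IH] p //=.
by rewrite pt_og IH -iterSr /= -addNb.
Qed.

Lemma dual_g_anti p q : (forall a, p a ==> q a) -> forall a, dual_g q a ==> dual_g p a.
Proof. by move=> H a; rewrite /dual_g implybNN H. Qed.

Lemma dual_pt0 p : in_dual p -> p (ozero A) = false. Proof. by case. Qed.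
Lemma dual_pt1 p : in_dual p -> p (oone A) = true. Proof. by case. Qed.
Lemma dual_ptj p a b : in_dual p -> p (ojoin a b) = p a || p b. Proof. by case. Qed.
Lemma dual_ptm p a b : in_dual p -> p (omeet a b) = p a && p b. Proof. by case. Qed.

End Pts.

Fixpoint tsubst (s : nat -> term) (t : term) : term :=
  match t with
  | tvar i => s i
  | tjoin a b => tjoin (tsubst s a) (tsubst s b)
  | tmeet a b => tmeet (tsubst s a) (tsubst s b)
  | tg a => tg (tsubst s a)
  | tzero => tzero
  | tone => tone
  end.

Lemma teval_ext (A : ockham) (v w : nat -> A) t : v =1 w -> teval v t = teval w t.
Proof. by move=> H; elim: t => //= [a Ha b Hb|a Ha b Hb|a Ha]; rewrite ?Ha ?Hb. Qed.

Lemma teval_subst (A : ockham) (v : nat -> A) s t :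
  teval v (tsubst s t) = teval (fun i => teval v (s i)) t.
Proof. by elim: t => //= [a Ha b Hb|a Ha b Hb|a Ha]; rewrite ?Ha ?Hb. Qed.

Definition tgn n s := iter n tg s.
Lemma teval_tgn (A : ockham) (v : nat -> A) n s :
  teval v (tgn n s) = iter n (@og A) (teval v s).
Proof. by elim: n => //= n ->. Qed.

Definition tJ n s := foldr (fun k acc => tjoin (tgn k.*2 s) acc) tzero (iota 0 n).

Lemma pt_tJ (A : ockham) (p : A -> bool) (v : nat -> A) n s : in_dual p ->
  p (teval v (tJ n s)) = has (fun k => p (iter k.*2 (@og A) (teval v s))) (iota 0 n).
Proof.
move=> dp; rewrite /tJ; elim: (iota 0 n) => [|k l IH] /=; first exact: dual_pt0.
by rewrite dual_ptj // IH teval_tgn.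
Qed.

Lemma tvars_tgn k n s : tvars_lt k s -> tvars_lt k (tgn n s).
Proof. by elim: n. Qed.
Lemma tvars_tJ k n s : tvars_lt k s -> tvars_lt k (tJ n s).
Proof.
move=> H; rewrite /tJ; elim: (iota 0 n) => //= j l IH; split=> //.
exact: tvars_tgn.
Qed.

Definition tD L :=
  let D := tJ L (tjoin (tmeet (tvar 0) (tgn L (tvar 1))) (tmeet (tgn L (tvar 0)) (tvar 1))) in
  tjoin (tmeet (tvar 0) D) (tmeet (tvar 2) (tgn L D)).

Lemma tvars_tD L : tvars_lt 3 (tD L).
Proof.
rewrite /tD /=; split; split=> //; try apply: tvars_tJ => //=;
  try apply: tvars_tgn; try apply: tvars_tJ => //=; repeat split => //; apply: tvars_tgn => //.
Qed.

Section BDisc.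
Variables (A : ockham) (m : nat) (phi : (A -> bool) -> 'I_m).
Hypothesis Hiso : dual_iso_Cm phi.
Hypothesis modd : odd m.
Variable L : nat.
Hypothesis Lodd : odd L.
Hypothesis mL : m %| L.

Lemma phi_iter n p : in_dual p -> (phi (iter n (@dual_g A) p) : nat) = (phi p + n) %% m.
Proof.
case: Hiso => _ _ _ _ Hg dp; elim: n => [|n IH] /=.
  by rewrite addn0 modn_small.
rewrite Hg; last exact: in_dual_iter.
by rewrite IH -[in LHS]addn1 modnDml addn1 addnS.
Qed.

Lemma eq_pt p q : in_dual p -> in_dual q -> (phi p : nat) = phi q -> forall a, p a = q a.
Proof. by case: Hiso => Hi _ _ _ _ dp dq H; apply: Hi => //; apply: val_inj. Qed.

Lemma iterL p : in_dual p -> forall a, iter L (@dual_g A) p a = p a.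
Proof.
move=> dp; apply: eq_pt => //; first exact: in_dual_iter.
rewrite phi_iter //; case/dvdnP: mL => k ->.
by rewrite addnC modnMDl modn_small.
Qed.

Lemma reach p q : in_dual p -> in_dual q ->
  exists k, k < m /\ forall a, iter k.*2 (@dual_g A) p a = q a.
Proof.
move=> dp dq.
have m0 : 0 < m by case: (m) modd.
set r := (phi q + (m - phi p)) %% m.
have rm : r < m by rewrite ltn_mod.
have [k [km k2]] : exists k, k < m /\ k.*2 %% m = r.
  case/boolP: (odd r) => [or|er].
  - exists (r + m)./2; split; first lia.
    have -> : (r+m)./2.*2 = r + m.
      by move: (odd_double_half (r+m)); rewrite oddD or modd /= add0n.
    by rewrite modnDr modn_small.
  - exists r./2; split.
      lia.
    have -> : r./2.*2 = r.
      by move: (odd_double_half r); rewrite (negbTE er) add0n.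
    by rewrite modn_small.
exists k; split=> //; apply: eq_pt => //; first exact: in_dual_iter.
rewrite phi_iter // -modnDmr k2 /r modnDmr addnA (addnC (phi p)) -addnA subnKC.
  by rewrite modnDr modn_small.
by apply: ltnW.
Qed.

Lemma pt_neg p a : in_dual p -> p (iter L (@og A) a) = ~~ p a.
Proof. by move=> dp; rewrite pt_ogn Lodd iterL. Qed.

Lemma pt_J p (v : nat -> A) s : in_dual p ->
  p (teval v (tJ L s)) = `[< teval v s <> ozero A >].
Proof.
move=> dp; rewrite pt_tJ //; apply/hasP/asboolP.
- case=> k _; rewrite pt_ogn odd_double /= => Hk H0; move: Hk; rewrite H0.
  by rewrite dual_pt0 //; apply: in_dual_iter.
- move=> Hs.
  have [q [dq [q1 q0]]] : exists q, in_dual q /\ q (teval v s) /\ ~~ q (ozero A).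
    apply: contrapT => Hn; apply: Hs; apply: separate => q dq.
    rewrite dual_pt0 //; case E: (q (teval v s)) => //; exfalso.
    by apply: Hn; exists q; rewrite dual_pt0.
  have [k [km Hk]] := reach dp dq.
  exists k; first by rewrite mem_iota add0n; apply: leq_trans km (dvdn_leq _ mL); case: (L) Lodd.
  by rewrite pt_ogn odd_double /= Hk.
Qed.

Lemma Bdisc : induces_discriminator A (tD L).
Proof.
move=> x y z.
set v := assign3 x y z.
have Pe : forall p, in_dual p -> p (teval v (tjoin (tmeet (tvar 0) (tgn L (tvar 1))) (tmeet (tgn L (tvar 0)) (tvar 1)))) = (p x != p y).
  move=> p dp /=; rewrite dual_ptj // !dual_ptm // !teval_tgn !pt_neg //=.
  by case: (p x); case: (p y).
have Pt : forall p, in_dual p -> p (teval v (tD L)) =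
   if `[< x <> y >] then p x else p z.
  move=> p dp; rewrite /tD /= dual_ptj // !dual_ptm // teval_tgn pt_neg // pt_J //.
  set e := teval _ _.
  have -> : `[< e <> ozero A >] = `[< x <> y >].
    apply/asboolP/asboolP => [He Exy|Hxy He].
    + apply: He; apply: separate => q dq; rewrite dual_pt0 //.
      by rewrite /e Pe // Exy eqxx.
    + apply: Hxy; apply: contrapT => Hn.
      have [q [dq Hq]] : exists q, in_dual q /\ q x != q y.
        apply: contrapT => Hn2; apply: Hn; apply: separate => q dq.
        apply: contrapT => H; apply: Hn2; exists q; split=> //; apply/eqP.
        exact: H.
      by move: Hq; rewrite -Pe // -/e He dual_pt0.
  by case: asboolP; rewrite ?andbT ?andbF ?orbF.
split=> [nxy|exy].
- apply: separate => p dp; rewrite Pt //.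
  by case: asboolP.
- apply: separate => p dp; rewrite Pt //.
  by case: asboolP.
Qed.

End BDisc.

Section Disc.
Variable t : term.

Definition disc (A : ockham) (a b c : A) := teval (assign3 a b c) t.
Definition sel3 p q r : nat -> term := fun i => match i with 0 => p | 1 => q | _ => r end.
Definition Tt p q r := tsubst (sel3 p q r) t.
Definition sw (A : ockham) (a b c d : A) := disc (disc a b c) (disc a b d) d.
Definition St p q r s := Tt (Tt p q r) (Tt p q s) s.

Lemma TtE (A : ockham) (v : nat -> A) p q r :
  teval v (Tt p q r) = disc (teval v p) (teval v q) (teval v r).
Proof. by rewrite teval_subst; apply: teval_ext; case=> [|[|i]]. Qed.

Lemma StE (A : ockham) (v : nat -> A) p q r s :
  teval v (St p q r s) = sw (teval v p) (teval v q) (teval v r) (teval v s).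
Proof. by rewrite /St !TtE. Qed.

Section Sem.
Variable A : ockham.
Hypothesis HA : induces_discriminator A t.
Implicit Types a b c d e : A.

Lemma discEq a c : disc a a c = c. Proof. by have [_ H] := HA a a c; apply: H. Qed.
Lemma discNeq a b c : a <> b -> disc a b c = a. Proof. by have [H _] := HA a b c; apply: H. Qed.
Lemma swEq a c d : sw a a c d = c.
Proof. by rewrite /sw !discEq; case: (pselect (c = d)) => [->|?]; rewrite ?discEq ?discNeq. Qed.
Lemma swNeq a b c d : a <> b -> sw a b c d = d.
Proof. by move=> H; rewrite /sw (discNeq c H) (discNeq d H) discEq. Qed.

Ltac cs a b := case: (pselect (a = b)) => [<-|?];
  rewrite ?discEq ?swEq ?discNeq ?swNeq //.

Lemma s1 a b : disc a b a = a. Proof. by cs a b. Qed.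
Lemma s2 a b : disc a b b = a. Proof. by cs a b. Qed.
Lemma s4j a b c c' : disc a b (ojoin c c') = disc a b (ojoin (disc a b c) (disc a b c')).
Proof. by cs a b. Qed.
Lemma s4m a b c c' : disc a b (omeet c c') = disc a b (omeet (disc a b c) (disc a b c')).
Proof. by cs a b. Qed.
Lemma s4g a b c : disc a b (og c) = disc a b (og (disc a b c)).
Proof. by cs a b. Qed.
Lemma s5j a b c d c' d' : sw a b (ojoin c c') (ojoin d d') = ojoin (sw a b c d) (sw a b c' d').
Proof. by cs a b. Qed.
Lemma s5m a b c d c' d' : sw a b (omeet c c') (omeet d d') = omeet (sw a b c d) (sw a b c' d').
Proof. by cs a b. Qed.
Lemma s5g a b c d : sw a b (og c) (og d) = og (sw a b c d).
Proof. by cs a b. Qed.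
Lemma s6 a b c d : sw a b d (sw a b c d) = d.
Proof. by cs a b. Qed.
Lemma s7 a b c d e : sw a b c (sw a b d e) = sw a b c e.
Proof. by cs a b. Qed.
Lemma s8 a b c d : sw a b (disc a b d) (sw a b c d) = d.
Proof. by cs a b. Qed.
Lemma s9 a b c : sw a b c c = c.
Proof. by cs a b. Qed.
Lemma s10 a b c : sw a b a (disc a b c) = a.
Proof. by cs a b. Qed.
End Sem.

Section SI.
Variable A : ockham.
Implicit Types a b c d e : A.
Hypothesis f1 : forall a b, disc a b a = a.
Hypothesis f2 : forall a b, disc a b b = a.
Hypothesis f3 : forall a c, disc a a c = c.
Hypothesis f4j : forall a b c c', disc a b (ojoin c c') = disc a b (ojoin (disc a b c) (disc a b c')).
Hypothesis f4m : forall a b c c', disc a b (omeet c c') = disc a b (omeet (disc a b c) (disc a b c')).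
Hypothesis f4g : forall a b c, disc a b (og c) = disc a b (og (disc a b c)).
Hypothesis f5j : forall a b c d c' d', sw a b (ojoin c c') (ojoin d d') = ojoin (sw a b c d) (sw a b c' d').
Hypothesis f5m : forall a b c d c' d', sw a b (omeet c c') (omeet d d') = omeet (sw a b c d) (sw a b c' d').
Hypothesis f5g : forall a b c d, sw a b (og c) (og d) = og (sw a b c d).
Hypothesis f6 : forall a b c d, sw a b d (sw a b c d) = d.
Hypothesis f7 : forall a b c d e, sw a b c (sw a b d e) = sw a b c e.
Hypothesis f8 : forall a b c d, sw a b (disc a b d) (sw a b c d) = d.
Hypothesis f9 : forall a b c, sw a b c c = c.
Hypothesis f10 : forall a b c, sw a b a (disc a b c) = a.

Lemma SI_disc : subdirectly_irreducible A -> induces_discriminator A t.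
Proof.
case=> p [q [npq Hpq]] a b c; split; last by move=> ->; apply: f3.
move=> nab.
pose th1 c d := disc a b c = disc a b d.
pose th2 c d := sw a b c d = c.
have c1 : congruence th1.
  split; rewrite /th1.
  - by [].
  - by split=> [x y ->|x y z -> ->].
  - by move=> x y x' y' H1 H2; rewrite f4j H1 H2 -f4j.
  - by move=> x y x' y' H1 H2; rewrite f4m H1 H2 -f4m.
  - by move=> x x' H; rewrite f4g H -f4g.
have c2 : congruence th2.
  split; rewrite /th2.
  - exact: f9.
  - split=> [x y H|x y z H1 H2].
    + by rewrite -{1}H f6.
    + by rewrite -(f7 _ _ x y z) H2 H1.
  - by move=> x y x' y' H1 H2; rewrite f5j H1 H2.
  - by move=> x y x' y' H1 H2; rewrite f5m H1 H2.
  - by move=> x x' H; rewrite f5g H.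
have inter : forall c d, th1 c d -> th2 c d -> c = d.
  move=> c0 d0 H1 H2.
  have e1 := f8 a b c0 d0; rewrite H2 -H1 in e1.
  have e2 := f8 a b c0 c0; rewrite f9 in e2.
  by rewrite -{1}e2 e1.
have pq1 : th1 p q by apply: Hpq => //; exists a, b; split=> //; rewrite /th1 f1 f2.
have triv2 : forall c d, th2 c d -> c = d.
  move=> c0 d0 H; apply: contrapT => ncd.
  have pq2 : th2 p q by apply: Hpq => //; exists c0, d0.
  by apply: npq; apply: inter.
by apply/esym/triv2; rewrite /th2 f10.
Qed.
End SI.

End Disc.

Lemma common_L (B : seq ockham) :
  (forall A, List.In A B -> exists m : nat, odd m /\ dual_isomorphic_Cm A m) ->
  exists L, odd L /\ forall A, List.In A B ->
    exists m (phi : (A -> bool) -> 'I_m), [/\ odd m, dual_iso_Cm phi & m %| L].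
Proof.
elim: B => [|A B IH] H; first by exists 1.
have [|L [oL HL]] := IH; first by move=> A0 HA0; apply: H; right.
have [m [om [phi Hphi]]] := H A (or_introl erefl).
exists (L * m); split; first by rewrite oddM oL om.
move=> A0 [<-|HA0]; first by exists m, phi; split=> //; apply: dvdn_mull.
have [m0 [phi0 [? ? ?]]] := HL A0 HA0; exists m0, phi0; split=> //.
exact: dvdn_mulr.
Qed.

Definition asg (A : ockham) (a : A) (l : seq A) : nat -> A := fun i => nth a l i.

Lemma disc_from_gen (E : term -> term -> Prop) (B : seq ockham) :
  generated_by E B ->
  (forall A, List.In A B -> exists m : nat, odd m /\ dual_isomorphic_Cm A m) ->
  discriminator_variety E.
Proof.
move=> Hgen HB.
have [L [oL HL]] := common_L HB.
have HBd : forall A, List.In A B -> induces_discriminator A (tD L).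
  move=> A HA; have [m [phi [om Hphi mL]]] := HL A HA.
  exact: (@Bdisc A m phi Hphi om L oL mL).
exists (tD L); split; first exact: tvars_tD.
move=> A' HA' SIA'.
set t := tD L.
have tr : forall l r, (forall A : ockham, induces_discriminator A t -> forall v : nat -> A,
    teval v l = teval v r) -> forall v : nat -> A', teval v l = teval v r.
  move=> l r Hlr; have := (proj1 (Hgen A') HA'); apply.
  by move=> A HA; apply: Hlr; apply: HBd.
pose X i := tvar i.
apply: SI_disc => //.
- move=> a b.
  have H : forall v : nat -> A', teval v (Tt t (X 0) (X 1) (X 0)) = teval v (X 0).
    by apply: tr => A HA v; rewrite /= ?StE ?TtE /= ?StE ?TtE; apply: (s1 HA).
  by have := H (asg a [:: a; b]); rewrite /= ?StE ?TtE /= ?StE ?TtE.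
- move=> a b.
  have H : forall v : nat -> A', teval v (Tt t (X 0) (X 1) (X 1)) = teval v (X 0).
    by apply: tr => A HA v; rewrite /= ?StE ?TtE /= ?StE ?TtE; apply: (s2 HA).
  by have := H (asg a [:: a; b]); rewrite /= ?StE ?TtE /= ?StE ?TtE.
- move=> a c.
  have H : forall v : nat -> A', teval v (Tt t (X 0) (X 0) (X 1)) = teval v (X 1).
    by apply: tr => A HA v; rewrite /= ?StE ?TtE /= ?StE ?TtE; apply: (discEq HA).
  by have := H (asg a [:: a; c]); rewrite /= ?StE ?TtE /= ?StE ?TtE.
- move=> a b c c'.
  have H : forall v : nat -> A', teval v (Tt t (X 0) (X 1) (tjoin (X 2) (X 3))) = teval v (Tt t (X 0) (X 1) (tjoin (Tt t (X 0) (X 1) (X 2)) (Tt t (X 0) (X 1) (X 3)))).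
    by apply: tr => A HA v; rewrite /= ?StE ?TtE /= ?StE ?TtE; apply: (s4j HA).
  by have := H (asg a [:: a; b; c; c']); rewrite /= ?StE ?TtE /= ?StE ?TtE.
- move=> a b c c'.
  have H : forall v : nat -> A', teval v (Tt t (X 0) (X 1) (tmeet (X 2) (X 3))) = teval v (Tt t (X 0) (X 1) (tmeet (Tt t (X 0) (X 1) (X 2)) (Tt t (X 0) (X 1) (X 3)))).
    by apply: tr => A HA v; rewrite /= ?StE ?TtE /= ?StE ?TtE; apply: (s4m HA).
  by have := H (asg a [:: a; b; c; c']); rewrite /= ?StE ?TtE /= ?StE ?TtE.
- move=> a b c.
  have H : forall v : nat -> A', teval v (Tt t (X 0) (X 1) (tg (X 2))) = teval v (Tt t (X 0) (X 1) (tg (Tt t (X 0) (X 1) (X 2)))).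
    by apply: tr => A HA v; rewrite /= ?StE ?TtE /= ?StE ?TtE; apply: (s4g HA).
  by have := H (asg a [:: a; b; c]); rewrite /= ?StE ?TtE /= ?StE ?TtE.
- move=> a b c d c' d'.
  have H : forall v : nat -> A', teval v (St t (X 0) (X 1) (tjoin (X 2) (X 4)) (tjoin (X 3) (X 5))) = teval v (tjoin (St t (X 0) (X 1) (X 2) (X 3)) (St t (X 0) (X 1) (X 4) (X 5))).
    by apply: tr => A HA v; rewrite /= ?StE ?TtE /= ?StE ?TtE; apply: (s5j HA).
  by have := H (asg a [:: a; b; c; d; c'; d']); rewrite /= ?StE ?TtE /= ?StE ?TtE.
- move=> a b c d c' d'.
  have H : forall v : nat -> A', teval v (St t (X 0) (X 1) (tmeet (X 2) (X 4)) (tmeet (X 3) (X 5))) = teval v (tmeet (St t (X 0) (X 1) (X 2) (X 3)) (St t (X 0) (X 1) (X 4) (X 5))).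
    by apply: tr => A HA v; rewrite /= ?StE ?TtE /= ?StE ?TtE; apply: (s5m HA).
  by have := H (asg a [:: a; b; c; d; c'; d']); rewrite /= ?StE ?TtE /= ?StE ?TtE.
- move=> a b c d.
  have H : forall v : nat -> A', teval v (St t (X 0) (X 1) (tg (X 2)) (tg (X 3))) = teval v (tg (St t (X 0) (X 1) (X 2) (X 3))).
    by apply: tr => A HA v; rewrite /= ?StE ?TtE /= ?StE ?TtE; apply: (s5g HA).
  by have := H (asg a [:: a; b; c; d]); rewrite /= ?StE ?TtE /= ?StE ?TtE.
- move=> a b c d.
  have H : forall v : nat -> A', teval v (St t (X 0) (X 1) (X 3) (St t (X 0) (X 1) (X 2) (X 3))) = teval v (X 3).
    by apply: tr => A HA v; rewrite /= ?StE ?TtE /= ?StE ?TtE; apply: (s6 HA).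
  by have := H (asg a [:: a; b; c; d]); rewrite /= ?StE ?TtE /= ?StE ?TtE.
- move=> a b c d e.
  have H : forall v : nat -> A', teval v (St t (X 0) (X 1) (X 2) (St t (X 0) (X 1) (X 3) (X 4))) = teval v (St t (X 0) (X 1) (X 2) (X 4)).
    by apply: tr => A HA v; rewrite /= ?StE ?TtE /= ?StE ?TtE; apply: (s7 HA).
  by have := H (asg a [:: a; b; c; d; e]); rewrite /= ?StE ?TtE /= ?StE ?TtE.
- move=> a b c d.
  have H : forall v : nat -> A', teval v (St t (X 0) (X 1) (Tt t (X 0) (X 1) (X 3)) (St t (X 0) (X 1) (X 2) (X 3))) = teval v (X 3).
    by apply: tr => A HA v; rewrite /= ?StE ?TtE /= ?StE ?TtE; apply: (s8 HA).
  by have := H (asg a [:: a; b; c; d]); rewrite /= ?StE ?TtE /= ?StE ?TtE.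
- move=> a b c.
  have H : forall v : nat -> A', teval v (St t (X 0) (X 1) (X 2) (X 2)) = teval v (X 2).
    by apply: tr => A HA v; rewrite /= ?StE ?TtE /= ?StE ?TtE; apply: (s9 HA).
  by have := H (asg a [:: a; b; c]); rewrite /= ?StE ?TtE /= ?StE ?TtE.
- move=> a b c.
  have H : forall v : nat -> A', teval v (St t (X 0) (X 1) (X 0) (Tt t (X 0) (X 1) (X 2))) = teval v (X 0).
    by apply: tr => A HA v; rewrite /= ?StE ?TtE /= ?StE ?TtE; apply: (s10 HA).
  by have := H (asg a [:: a; b; c]); rewrite /= ?StE ?TtE /= ?StE ?TtE.
Qed.

Fixpoint depth (t : term) : nat :=
  match t with
  | tvar _ | tzero | tone => 0
  | tjoin a b | tmeet a b => maxn (depth a) (depth b)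
  | tg a => (depth a).+1
  end.

Lemma mono (A : ockham) (t : term) (y y' : A -> bool) (v v' : nat -> A) :
  in_dual y -> in_dual y' ->
  (forall j n, n <= depth t -> if odd n
     then iter n (@dual_g A) y' (v' j) ==> iter n (@dual_g A) y (v j)
     else iter n (@dual_g A) y (v j) ==> iter n (@dual_g A) y' (v' j)) ->
  y (teval v t) ==> y' (teval v' t).
Proof.
elim: t y y' v v' => [j|a Ha b Hb|a Ha b Hb|a Ha||] y y' v v' dy dy' H /=.
- exact: (H j 0).
- rewrite !dual_ptj //.
  have /implyP h1 := Ha y y' v v' dy dy' (fun j n hn => H j n (leq_trans hn (leq_maxl _ _))).
  have /implyP h2 := Hb y y' v v' dy dy' (fun j n hn => H j n (leq_trans hn (leq_maxr _ _))).
  by apply/implyP => /orP[/h1|/h2] ->; rewrite ?orbT.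
- rewrite !dual_ptm //.
  have /implyP h1 := Ha y y' v v' dy dy' (fun j n hn => H j n (leq_trans hn (leq_maxl _ _))).
  have /implyP h2 := Hb y y' v v' dy dy' (fun j n hn => H j n (leq_trans hn (leq_maxr _ _))).
  by apply/implyP => /andP[/h1 -> /h2 ->].
- rewrite !pt_og implybNN.
  apply: (Ha (dual_g y') (dual_g y) v' v); try apply: in_dual_g => //.
  move=> j n hn; have := H j n.+1 hn.
  by rewrite !iterSr /=; case: (odd n).
- by rewrite dual_pt0.
- by rewrite (dual_pt1 dy') implybT.
Qed.

Lemma iter_anti (A : ockham) (p q : A -> bool) : (forall a, p a ==> q a) ->
  forall n a, if odd n then iter n (@dual_g A) q a ==> iter n (@dual_g A) p a
              else iter n (@dual_g A) p a ==> iter n (@dual_g A) q a.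
Proof.
move=> H n; elim: n => [|n IH] a //=.
case: (odd n) IH => /= IH.
- by apply: dual_g_anti.
- by apply: dual_g_anti.
Qed.

Section Classify.
Variables (S : ockham) (t : term).
Hypothesis HS : induces_discriminator S t.
Hypothesis nt : ozero S <> oone S.
Local Notation d := (depth t).
Local Notation W y n := (iter n (@dual_g S) y).

Lemma no_sle y p q : in_dual y -> p <> q ->
  (forall n, n <= d -> if odd n then W y n q ==> W y n p else W y n p ==> W y n q) -> False.
Proof.
move=> dy npq H.
have M1 : forall r, y p ==> y r.
  move=> r; have := @mono S t y y (assign3 p q r) (assign3 q q r) dy dy.
  have e1 : teval (assign3 p q r) t = p by have [H1 _] := HS p q r; exact: H1.
  have e2 : teval (assign3 q q r) t = r by have [_ H1] := HS q q r; exact: H1.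
  rewrite e1 e2; apply.
  case=> [|[|j]] n hn /=; first exact: H.
  + by case: ifP => _; apply: implybb.
  + by case: ifP => _; apply: implybb.
have yp : y p = false by have := M1 (ozero S); rewrite dual_pt0 // implybF => /negbTE.
have := @mono S t y y (assign3 p p (oone S)) (assign3 p q (oone S)) dy dy.
have e1 : teval (assign3 p q (oone S)) t = p by have [H1 _] := HS p q (oone S); exact: H1.
have e2 : teval (assign3 p p (oone S)) t = oone S by have [_ H1] := HS p p (oone S); exact: H1.
rewrite e1 e2 yp dual_pt1 // => Hm; have: true ==> false; last by [].
apply: Hm; case=> [|[|j]] n hn /=.
+ by case: ifP => _; apply: implybb.
+ exact: H.
+ by case: ifP => _; apply: implybb.
Qed.

Lemma starstar y a c : in_dual y -> omeet a c <> a ->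
  (exists2 n, n <= d & ~~ odd n && (W y n a && ~~ W y n c)) /\
  (exists2 n, n <= d & odd n && (W y n a && ~~ W y n c)).
Proof.
move=> dy nac; have dW : forall n, in_dual (W y n) by move=> n; apply: in_dual_iter.
split; apply: contrapT => Hn.
- apply: (@no_sle y a (omeet a c) dy (nesym nac)) => n hn.
  rewrite dual_ptm //; case: ifP => on.
  + by apply/implyP => /andP[].
  + apply/implyP => Ha; rewrite Ha /=; apply: contrapT => /negP Hc.
    by apply: Hn; exists n => //; rewrite on Ha Hc.
- apply: (@no_sle y (omeet a c) a dy nac) => n hn.
  rewrite dual_ptm //; case: ifP => on.
  + apply/implyP => Ha; rewrite Ha /=; apply: contrapT => /negP Hc.
    by apply: Hn; exists n => //; rewrite on Ha Hc.
  + by apply/implyP => /andP[].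
Qed.

Lemma avoid y (F : S -> bool) (ns : seq nat) : in_dual y -> in_dual F ->
  (forall n, n \in ns -> W y n <> F) ->
  exists a c, [/\ F a, ~~ F c & forall n, n \in ns -> ~~ (W y n a && ~~ W y n c)].
Proof.
move=> dy dF; have dW : forall n, in_dual (W y n) by move=> n; apply: in_dual_iter.
elim: ns => [|n ns IH] Hns.
  by exists (oone S), (ozero S); split; rewrite ?dual_pt1 ?dual_pt0.
have [|a [c [Fa Fc Hac]]] := IH.
  by move=> k kn; apply: Hns; rewrite inE kn orbT.
have [e He] : exists e, W y n e != F e.
  apply: contrapT => Hn; apply: (Hns n (mem_head _ _)); apply: funext => e.
  by apply/eqP; apply: contrapT => He; apply: Hn; exists e; apply/negP.
case/boolP: (F e) => Fe.
- exists (omeet a e), c; split; first by rewrite dual_ptm // Fa Fe.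
  + done.
  + move=> k; rewrite inE => /orP[/eqP ->|kn].
      by move: He; rewrite Fe dual_ptm //; case: (W y n e); rewrite ?andbF.
    rewrite dual_ptm //; move: (Hac k kn); apply: contra => /andP[/andP[-> _] ->].
    done.
- exists a, (ojoin c e); split; first done.
  + by rewrite dual_ptj // negb_or Fc Fe.
  + move=> k; rewrite inE => /orP[/eqP ->|kn].
      by move: He; rewrite (negbTE Fe) dual_ptj //; case: (W y n e); rewrite ?orbT ?andbF.
    rewrite dual_ptj //; move: (Hac k kn); apply: contra => /andP[-> /norP[-> _]].
    done.
Qed.

Lemma orbit_all y F : in_dual y -> in_dual F ->
  (exists n, [/\ n <= d, ~~ odd n & W y n = F]) /\
  (exists n, [/\ n <= d, odd n & W y n = F]).
Proof.
move=> dy dF.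
have key : forall b : bool, exists n, [/\ n <= d, odd n = b & W y n = F].
  move=> b; apply: contrapT => Hn.
  have [|a [c [Fa Fc Hac]]] := @avoid y F [seq n <- iota 0 d.+1 | odd n == b] dy dF.
    move=> n; rewrite mem_filter mem_iota add0n ltnS => /andP[/eqP on nd] E.
    by apply: Hn; exists n.
  have nac : omeet a c <> a.
    by move=> E; move: Fc; rewrite -E dual_ptm // in Fa; case/andP: Fa => _ ->.
  have [[n1 n1d H1] [n2 n2d H2]] := starstar dy nac.
  case: b {Hn} Hac => Hac.
  + move/andP: H2 => [o2 H2]; move: (Hac n2); rewrite H2.
    by rewrite mem_filter mem_iota add0n ltnS n2d o2 /=; move/(_ isT).
  + move/andP: H1 => [o1 H1]; move: (Hac n1); rewrite H1.
    by rewrite mem_filter mem_iota add0n ltnS n1d (negbTE o1) /=; move/(_ isT).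
have [n [? ? ?]] := key false; have [n' [? ? ?]] := key true.
split; [exists n; split=> //; apply/negbT | exists n'; split].
done. done. done. done.
Qed.

End Classify.

Section Cm.
Variable n : nat.
Definition cT := 'I_n -> bool.
Definition cj (f g : cT) : cT := fun i => f i || g i.
Definition cm (f g : cT) : cT := fun i => f i && g i.
Definition cg (f : cT) : cT := fun i => ~~ f (ordS i).
Definition c0 : cT := fun _ => false.
Definition c1 : cT := fun _ => true.

Ltac fx := move=> *; apply: funext => i; rewrite /cj /cm /cg /c0 /c1.
Lemma cjC f g : cj f g = cj g f. Proof. by fx; rewrite orbC. Qed.
Lemma cmC f g : cm f g = cm g f. Proof. by fx; rewrite andbC. Qed.
Lemma cjA f g h : cj f (cj g h) = cj (cj f g) h. Proof. by fx; rewrite orbA. Qed.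
Lemma cmA f g h : cm f (cm g h) = cm (cm f g) h. Proof. by fx; rewrite andbA. Qed.
Lemma cjab f g : cj f (cm f g) = f. Proof. by fx; case: (f i). Qed.
Lemma cmab f g : cm f (cj f g) = f. Proof. by fx; case: (f i). Qed.
Lemma cmD f g h : cm f (cj g h) = cj (cm f g) (cm f h). Proof. by fx; rewrite andb_orr. Qed.
Lemma cj0 f : cj f c0 = f. Proof. by fx; rewrite orbF. Qed.
Lemma cm1 f : cm f c1 = f. Proof. by fx; rewrite andbT. Qed.
Lemma cgj f g : cg (cj f g) = cm (cg f) (cg g). Proof. by fx; rewrite negb_or. Qed.
Lemma cgm f g : cg (cm f g) = cj (cg f) (cg g). Proof. by fx; rewrite negb_and. Qed.
Lemma cg0 : cg c0 = c1. Proof. by fx. Qed.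
Lemma cg1 : cg c1 = c0. Proof. by fx. Qed.

Definition CmAlg : ockham :=
  @Ockham cT cj cm cg c0 c1 cjC cmC cjA cmA cjab cmab cmD cj0 cm1 cgj cgm cg0 cg1.
End Cm.

Section CmDual.
Variable k : nat.
Local Notation n := k.*2.+1.
Local Notation C := (CmAlg n).

Definition cpt (i : 'I_n) : C := fun j => j == i.
Definition cphi (x : C -> bool) : 'I_n :=
  if [pick i | x (cpt i)] is Some i then i else ord0.

Lemma Cpt (x : C -> bool) : in_dual x -> exists i, forall f : C, x f = f i.
Proof.
move=> dx.
have [i Hi] : exists i, x (cpt i).
  have E : (oone C) = foldr (fun i acc => ojoin (cpt i) acc) (ozero C) (enum 'I_n).
    apply: funext => j /=; rewrite /c1.
    have : j \in enum 'I_n by rewrite mem_enum.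
    elim: (enum 'I_n) => //= i0 s IH; rewrite inE /cj /cpt /= => /orP[->//|/IH <-].
  have : x (oone C) by rewrite dual_pt1.
  rewrite E; elim: (enum 'I_n) => [|i0 s IH] /=; first by rewrite dual_pt0.
  rewrite dual_ptj // => /orP[H|/IH //]; by exists i0.
exists i => f; case/boolP: (f i) => fi.
- have E : omeet (cpt i) f = cpt i.
    by apply: funext => j /=; rewrite /cm /cpt; case: eqP => // ->.
  by move: Hi; rewrite -E dual_ptm // => /andP[].
- have E : omeet f (cpt i) = ozero C.
    apply: funext => j /=; rewrite /cm /cpt /c0; case: eqP => [->|]; last by rewrite andbF.
    by rewrite (negbTE fi).
  apply/negbTE; apply/negP => xf.
  by move: (dual_pt0 dx); rewrite -E dual_ptm // xf Hi.
Qed.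

Lemma cphiE x : in_dual x -> forall f : C, x f = f (cphi x).
Proof.
move=> dx; have [i Hi] := Cpt dx; rewrite /cphi.
case: pickP => [j Hj|H].
- have : cpt j i by rewrite -Hi.
  by rewrite /cpt => /eqP <-; exact: Hi.
- by move: (H i); rewrite Hi /cpt eqxx.
Qed.

Definition cev (i : 'I_n) : C -> bool := fun f => f i.
Lemma cev_dual i : in_dual (cev i).
Proof. by split. Qed.
Lemma cphi_ev i : cphi (cev i) = i.
Proof. by have := cphiE (cev_dual i) (cpt i); rewrite /cev /cpt eqxx => /esym/eqP. Qed.

Lemma CmAlg_dual : dual_isomorphic_Cm C n.
Proof.
exists cphi; split.
- by move=> x y dx dy E a; rewrite (cphiE dx) (cphiE dy) E.
- by move=> i; exists (cev i); [apply: cev_dual|apply: cphi_ev].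
- move=> x y dx dy; split.
  + move=> H; have := H (cpt (cphi x)); rewrite (cphiE dx) (cphiE dy) /cpt eqxx /=.
    by move/eqP.
  + by move=> E a; rewrite (cphiE dx) (cphiE dy) E implybb.
- move=> i x dx Ex; exists [:: cpt i] => y dy H.
  have := H (cpt i) (or_introl erefl); rewrite (cphiE dx) (cphiE dy) Ex /cpt eqxx.
  by move/eqP.
- move=> x dx.
  have -> : dual_g x = cev (ordS (cphi x)).
    by apply: funext => f; rewrite /dual_g (cphiE dx) /= /cg negbK.
  by rewrite cphi_ev.
Qed.
End CmDual.

Definition is_hom (A A' : ockham) (f : A -> A') :=
  [/\ forall a b, f (ojoin a b) = ojoin (f a) (f b),
      forall a b, f (omeet a b) = omeet (f a) (f b),
      forall a, f (og a) = og (f a),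
      f (ozero A) = ozero A' & f (oone A) = oone A'].

Lemma hom_teval (A A' : ockham) (f : A -> A') (v : nat -> A) t :
  is_hom f -> f (teval v t) = teval (fun i => f (v i)) t.
Proof.
case=> hj hm hg h0 h1; elim: t => //= [a Ha b Hb|a Ha b Hb|a Ha].
- by rewrite hj Ha Hb.
- by rewrite hm Ha Hb.
- by rewrite hg Ha.
Qed.

Section Build.
Variables (S : ockham) (y0 : S -> bool) (m : nat).
Hypothesis dy0 : in_dual y0.
Hypothesis m0 : 0 < m.
Hypothesis modd : odd m.
Local Notation W y n := (iter n (@dual_g S) y).
Hypothesis Hm : W y0 m = y0.
Hypothesis Hmin : forall n, 0 < n -> W y0 n = y0 -> m <= n.
Hypothesis allpts : forall F, in_dual F -> exists n, W y0 n = F.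

Lemma iterMm q : W y0 (q * m) = y0.
Proof. by elim: q => //= q IH; rewrite mulSn iterD IH Hm. Qed.

Lemma xmod n : W y0 n = W y0 (n %% m).
Proof. by rewrite {1}(divn_eq n m) addnC iterD iterMm. Qed.

Lemma xdist_lt i j : i < j -> j < m -> W y0 i <> W y0 j.
Proof.
move=> ij jm E.
have : W y0 (m - j + i) = y0.
  by rewrite iterD E -iterD subnK ?Hm //; apply: ltnW.
move/(Hmin _); lia.
Qed.

Lemma xdist i j : i < m -> j < m -> W y0 i = W y0 j -> i = j.
Proof.
move=> im jm E; case: (ltngtP i j) => // ij.
- by case: (xdist_lt ij jm E).
- by case: (xdist_lt ij im (esym E)).
Qed.

Lemma xper i : W (W y0 i) m = W y0 i.
Proof. by rewrite -iterD addnC iterD Hm. Qed.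

Lemma xanti i j : (forall a, W y0 i a ==> W y0 j a) -> W y0 i = W y0 j.
Proof.
move=> H; have := iter_anti H m; rewrite modd !xper => H2.
by apply: funext => a; apply/idP/idP; [move/implyP: (H a)|move/implyP: (H2 a)].
Qed.

Lemma xin_dual n : in_dual (W y0 n).
Proof. exact: in_dual_iter. Qed.

Lemma e_ex i : i < m -> exists e, forall j, j < m -> W y0 j e = (j == i).
Proof.
move=> im.
have : forall js : seq nat, exists e, W y0 i e /\ forall j, j \in js -> j < m -> j != i -> ~~ W y0 j e.
  elim=> [|j js [e [He Hjs]]].
    by exists (oone S); split=> //; apply: dual_pt1; apply: xin_dual.
  case: (boolP ((j < m) && (j != i))) => [/andP[jm ji]|H].
  - have : W y0 i <> W y0 j by move=> E; move: ji; rewrite (xdist im jm E) eqxx.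
    move=> nE; have [f Hf] : exists f, W y0 i f && ~~ W y0 j f.
      apply: contrapT => Hn; apply: nE; apply: xanti => a; apply: contrapT => /negP Ha.
      by apply: Hn; exists a; move: Ha; case: (W y0 i a); case: (W y0 j a).
    case/andP: Hf => Hf1 Hf2.
    exists (omeet e f); split; first by rewrite dual_ptm ?He ?Hf1 //; apply: xin_dual.
    move=> j'; rewrite inE => /orP[/eqP -> _ _|j'js j'm j'i].
      by rewrite dual_ptm ?(negbTE Hf2) ?andbF //; apply: xin_dual.
    by rewrite dual_ptm ?(negbTE (Hjs _ j'js j'm j'i)) //; apply: xin_dual.
  - exists e; split=> // j'; rewrite inE => /orP[/eqP -> jm ji|]; last exact: Hjs.
    by move: H; rewrite jm ji.
case/(_ (iota 0 m)) => e [He Hjs]; exists e => j jm.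
case: eqP => [->//|/eqP ji]; apply/negbTE; apply: Hjs => //.
by rewrite mem_iota add0n.
Qed.

Lemma surj_ex (T : seq nat) : exists a, forall i, i < m -> W y0 i a = (i \in T).
Proof.
elim: T => [|j T [a Ha]].
  by exists (ozero S) => i _; rewrite dual_pt0 //; apply: xin_dual.
case: (ltnP j m) => jm.
- have [e He] := e_ex jm; exists (ojoin a e) => i im.
  by rewrite dual_ptj ?Ha ?He // ?inE 1?orbC //; apply: xin_dual.
- exists a => i im; rewrite Ha // inE; case: eqP => // ij; move: im; rewrite ij.
  by rewrite ltnNge jm.
Qed.

Definition psi (a : S) : CmAlg m := fun i : 'I_m => W y0 i a.

Lemma psi_hom : is_hom psi.
Proof.
split.
- by move=> a b; apply: funext => i; rewrite /psi /= /cj dual_ptj //; apply: xin_dual.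
- by move=> a b; apply: funext => i; rewrite /psi /= /cm dual_ptm //; apply: xin_dual.
- move=> a; apply: funext => i; rewrite /psi /= /cg pt_og.
  by change (dual_g (W y0 i)) with (W y0 i.+1); rewrite (xmod i.+1).
- by apply: funext => i; rewrite /psi /= /c0 dual_pt0 //; apply: xin_dual.
- by apply: funext => i; rewrite /psi /= /c1 dual_pt1 //; apply: xin_dual.
Qed.

Lemma psi_inj : injective psi.
Proof.
move=> a b E; apply: separate => F dF.
have [n <-] := allpts dF; rewrite xmod.
by have := congr1 (fun f => f (Ordinal (ltn_pmod n m0))) E.
Qed.

Lemma psi_surj (g : CmAlg m) : exists a, psi a = g.
Proof.
have [a Ha] := surj_ex [seq val i | i <- [seq i <- enum 'I_m | g i]].
exists a; apply: funext => i; rewrite /psi Ha // mem_map; last exact: val_inj.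
by rewrite mem_filter mem_enum andbT.
Qed.
End Build.

Lemma classify (S : ockham) (t : term) : induces_discriminator S t -> ozero S <> oone S ->
  exists k, k <= depth t /\ exists f : S -> CmAlg (k.*2.+1),
    [/\ is_hom f, injective f & forall g, exists a, f a = g].
Proof.
move=> HS nt.
have [y0 [dy0 _]] : exists y, in_dual y /\ y (oone S) /\ ~~ y (ozero S).
  by apply: PIT => E; apply: nt; rewrite /le omeet1x in E.
have [_ [n1 [n1d o1 H1]]] := orbit_all HS dy0 dy0.
pose P n := (0 < n) && `[< iter n (@dual_g S) y0 = y0 >].
have exP : exists n, P n.
  by exists n1; rewrite /P (odd_gt0 o1) /=; apply/asboolP.
case: (ex_minnP exP) => m /andP[m0 /asboolP Hm] Hmin.
have Hmin' : forall n, 0 < n -> iter n (@dual_g S) y0 = y0 -> m <= n.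
  by move=> n n0 Hn; apply: Hmin; rewrite /P n0; apply/asboolP.
have allpts : forall F, in_dual F -> exists n, iter n (@dual_g S) y0 = F.
  by move=> F dF; have [[n [_ _ Hn]] _] := orbit_all HS dy0 dF; exists n.
have mdiv : m %| n1.
  apply/eqP; apply: contrapT => /eqP nz.
  have H0 : 0 < n1 %% m by rewrite lt0n.
  have := Hmin' _ H0; rewrite -(xmod Hm) H1 => /(_ erefl).
  by rewrite leqNgt ltn_pmod.
have modd := dvdn_odd mdiv o1.
have md : m <= depth t by apply: leq_trans (dvdn_leq (odd_gt0 o1) mdiv) n1d.
exists m./2; split; first lia.
have Em : m = (m./2).*2.+1 by rewrite -{1}(odd_double_half m) modd add1n.
rewrite -Em; exists (@psi S y0 m); split.
- exact: psi_hom.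
- exact: psi_inj.
- exact: psi_surj.
Qed.

Section Quot.
Variables (A : ockham) (th : A -> A -> Prop).
Hypothesis Hth : congruence th.

Definition qT := {P : A -> Prop | exists a, P = th a}.
Definition cls (a : A) : qT := exist _ (th a) (ex_intro _ a erefl).

Lemma cls_eq a b : cls a = cls b <-> th a b.
Proof.
case: Hth => Hr [Hs Htr] _ _ _; split.
- move/(congr1 sval) => /= E.
  have : th a a by apply: Hr.
  by rewrite E => /Hs.
- move=> H; apply: eq_exist; apply: funext => c; apply: propext.
  split=> [H1|H2]; [apply: Htr (Hs _ _ H) H1|apply: Htr H H2].
Qed.

Lemma cls_surj (q : qT) : exists a, q = cls a.
Proof. by case: q => P HP; case: (HP) => a E; exists a; apply: eq_exist. Qed.

Lemma elim_q (P : qT -> Prop) : (forall a, P (cls a)) -> forall q, P q.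
Proof. by move=> H q; have [a ->] := cls_surj q. Qed.

Definition rep (q : qT) : A := sval (cid (cls_surj q)).
Lemma rep_spec q : q = cls (rep q).
Proof. exact: (svalP (cid (cls_surj q))). Qed.
Lemma rep_cls a : th (rep (cls a)) a.
Proof. by apply/cls_eq; rewrite -rep_spec. Qed.

Definition qj p q := cls (ojoin (rep p) (rep q)).
Definition qm p q := cls (omeet (rep p) (rep q)).
Definition qg p := cls (og (rep p)).
Definition q0 := cls (ozero A).
Definition q1 := cls (oone A).

Lemma qjE a b : qj (cls a) (cls b) = cls (ojoin a b).
Proof. by case: Hth => _ _ Hj _ _; apply/cls_eq; apply: Hj; apply: rep_cls. Qed.
Lemma qmE a b : qm (cls a) (cls b) = cls (omeet a b).
Proof. by case: Hth => _ _ _ Hm _; apply/cls_eq; apply: Hm; apply: rep_cls. Qed.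
Lemma qgE a : qg (cls a) = cls (og a).
Proof. by case: Hth => _ _ _ _ Hg; apply/cls_eq; apply: Hg; apply: rep_cls. Qed.

Lemma qjC x y : qj x y = qj y x.
Proof. by elim/elim_q: x => a; elim/elim_q: y => b; rewrite !qjE ojoinC. Qed.
Lemma qmC x y : qm x y = qm y x.
Proof. by elim/elim_q: x => a; elim/elim_q: y => b; rewrite !qmE omeetC. Qed.
Lemma qjA x y z : qj x (qj y z) = qj (qj x y) z.
Proof. by elim/elim_q: x => a; elim/elim_q: y => b; elim/elim_q: z => c; rewrite !qjE ojoinA. Qed.
Lemma qmA x y z : qm x (qm y z) = qm (qm x y) z.
Proof. by elim/elim_q: x => a; elim/elim_q: y => b; elim/elim_q: z => c; rewrite !qmE omeetA. Qed.
Lemma qjab x y : qj x (qm x y) = x.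
Proof. by elim/elim_q: x => a; elim/elim_q: y => b; rewrite qmE qjE ojoin_absorb. Qed.
Lemma qmab x y : qm x (qj x y) = x.
Proof. by elim/elim_q: x => a; elim/elim_q: y => b; rewrite qjE qmE omeet_absorb. Qed.
Lemma qmD x y z : qm x (qj y z) = qj (qm x y) (qm x z).
Proof.
by elim/elim_q: x => a; elim/elim_q: y => b; elim/elim_q: z => c; rewrite qjE !qmE qjE omeet_distr.
Qed.
Lemma qj0 x : qj x q0 = x.
Proof. by elim/elim_q: x => a; rewrite qjE ojoin0. Qed.
Lemma qm1 x : qm x q1 = x.
Proof. by elim/elim_q: x => a; rewrite qmE omeet1. Qed.
Lemma qgj x y : qg (qj x y) = qm (qg x) (qg y).
Proof. by elim/elim_q: x => a; elim/elim_q: y => b; rewrite qjE !qgE qmE og_join. Qed.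
Lemma qgm x y : qg (qm x y) = qj (qg x) (qg y).
Proof. by elim/elim_q: x => a; elim/elim_q: y => b; rewrite qmE !qgE qjE og_meet. Qed.
Lemma qg0 : qg q0 = q1.
Proof. by rewrite qgE og0. Qed.
Lemma qg1 : qg q1 = q0.
Proof. by rewrite qgE og1. Qed.

Definition qalg : ockham :=
  @Ockham qT qj qm qg q0 q1 qjC qmC qjA qmA qjab qmab qmD qj0 qm1 qgj qgm qg0 qg1.

Lemma teval_cls (w : nat -> A) t :
  teval (fun i => (cls (w i) : qalg)) t = cls (teval w t).
Proof.
elim: t => //= [a Ha b Hb|a Ha b Hb|a Ha].
- by rewrite Ha Hb qjE.
- by rewrite Ha Hb qmE.
- by rewrite Ha qgE.
Qed.

Lemma qvar (E : term -> term -> Prop) : in_variety E A -> in_variety E qalg.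
Proof.
move=> HA s u Hsu v.
have -> : v = fun i => (cls (rep (v i)) : qalg) by apply: funext => i; apply: rep_spec.
by rewrite !teval_cls (HA s u Hsu).
Qed.
End Quot.

Lemma max_cong (A : ockham) (s0 u0 : A) : s0 <> u0 ->
  exists th, [/\ congruence th, ~ th s0 u0 &
    forall th', congruence th' -> (forall a b, th a b -> th' a b) -> ~ th' s0 u0 ->
       forall a b, th' a b -> th a b].
Proof.
move=> nsu.
pose rX (X : set (A * A)) a b := a = b \/ X (a, b).
pose P (X : set (A * A)) := congruence (rX X) /\ ~ rX X s0 u0.
have [M [[cM nM] Mmax]] : exists M, P M /\ (forall B, (M `<` B)%classic -> ~ P B).
  apply: Zorn_bigcup => F FP Ftot.
  set U := (\bigcup_(X in F) X)%classic.
  have lift : forall X a b, F X -> rX X a b -> rX U a b.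
    by move=> X a b FX [->|H]; [left|right; exists X].
  have two : forall a b c d, rX U a b -> rX U c d ->
      (a = b /\ c = d) \/ exists X, [/\ F X, rX X a b & rX X c d].
    move=> a b c d [ab|[X FX Xab]] [cd|[Y FY Ycd]].
    + by left.
    + by right; exists Y; split=> //; [left|right].
    + by right; exists X; split=> //; [right|left].
    + case: (Ftot X Y FX FY) => [XY|YX].
      * by right; exists Y; split=> //; right=> //; apply: XY.
      * by right; exists X; split=> //; right=> //; apply: YX.
  split; last first.
    case=> [//|[X FX Xsu]]; by case: (FP X FX) => _; apply; right.
  split.
  - by move=> x; left.
  - split.
    + move=> x y [->|[X FX Xxy]]; first by left.
      have [_ [Hs _] _ _ _] := (FP X FX).1.
      by apply: (lift X) => //; apply: Hs; right.
    + move=> x y z Hxy Hyz; case: (two _ _ _ _ Hxy Hyz) => [[-> ->]|[X [FX H1 H2]]].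
        by left.
      have [_ [_ Ht] _ _ _] := (FP X FX).1.
      by apply: (lift X) => //; apply: Ht H1 H2.
  - move=> x y x' y' H1 H2; case: (two _ _ _ _ H1 H2) => [[-> ->]|[X [FX K1 K2]]].
      by left.
    have [_ _ Hj _ _] := (FP X FX).1.
    by apply: (lift X) => //; apply: Hj.
  - move=> x y x' y' H1 H2; case: (two _ _ _ _ H1 H2) => [[-> ->]|[X [FX K1 K2]]].
      by left.
    have [_ _ _ Hm _] := (FP X FX).1.
    by apply: (lift X) => //; apply: Hm.
  - move=> x x' [->|[X FX Xx]]; first by left.
    have [_ _ _ _ Hg] := (FP X FX).1.
    by apply: (lift X) => //; apply: Hg; right.
exists (rX M); split=> // th' cth' sub nth' a b th'ab.
apply: contrapT => nab.
have [_ [Hs' Ht'] _ _ _] := cth'.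
apply: (Mmax (fun p => th' p.1 p.2)).
- split.
  + by case=> x y Mxy /=; apply: sub; right.
  + by move=> H; apply: nab; right; apply: (H (a, b)).
- have E : forall x y, rX (fun p => th' p.1 p.2) x y <-> th' x y.
    move=> x y; split=> [[->|//]|H]; last by right.
    by case: cth'.
  split.
  + case: cth' => Hr [Hs Ht] Hj Hm Hg; split.
    * by move=> x; apply/E.
    * by split=> [x y /E H|x y z /E H1 /E H2]; apply/E; [apply: Hs|apply: Ht H1 H2].
    * by move=> x y x' y' /E H1 /E H2; apply/E; apply: Hj.
    * by move=> x y x' y' /E H1 /E H2; apply/E; apply: Hm.
    * by move=> x x' /E H; apply/E; apply: Hg.
  + by move/E.
Qed.

Lemma quot_SI (A : ockham) (s0 u0 : A) (th : A -> A -> Prop) (cth : congruence th) :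
  ~ th s0 u0 ->
  (forall th', congruence th' -> (forall a b, th a b -> th' a b) -> ~ th' s0 u0 ->
       forall a b, th' a b -> th a b) ->
  subdirectly_irreducible (qalg cth).
Proof.
move=> nth maxth.
exists (cls th s0), (cls th u0); split; first by move/(cls_eq cth).
move=> phi cphi [x [y [phixy nxy]]].
pose th' a b := phi (cls th a) (cls th b).
have [Pr [Ps Pt] Pj Pm Pg] := cphi.
have cth' : congruence th'.
  split; rewrite /th'.
  - by move=> a; apply: Pr.
  - by split=> [a b|a b c]; [apply: Ps|apply: Pt].
  - by move=> a b a' b' H1 H2; rewrite -!(qjE cth); apply: Pj.
  - by move=> a b a' b' H1 H2; rewrite -!(qmE cth); apply: Pm.
  - by move=> a a' H; rewrite -!(qgE cth); apply: Pg.
apply: contrapT => nphi.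
have sub : forall a b, th a b -> th' a b.
  by move=> a b /(cls_eq cth) E; rewrite /th' E; apply: Pr.
move: phixy nxy; elim/elim_q: x => a; elim/elim_q: y => b => Hab nab.
by apply: nab; apply/(cls_eq cth); apply: (maxth th' cth' sub nphi).
Qed.

Fixpoint mkB (E : term -> term -> Prop) (n : nat) : seq ockham :=
  match n with
  | 0 => [::]
  | n'.+1 => if `[< in_variety E (CmAlg n'.*2.+1) >] then CmAlg n'.*2.+1 :: mkB E n'
             else mkB E n'
  end.

Lemma In_mkB E n A : List.In A (mkB E n) ->
  exists k, [/\ k < n, in_variety E (CmAlg k.*2.+1) & A = CmAlg k.*2.+1].
Proof.
elim: n => [//|n IH] /=.
case: asboolP => H.
- case=> [<-|/IH [k [kn Hk ->]]]; first by exists n.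
  by exists k; split=> //; apply: ltnW.
- by move/IH => [k [kn Hk ->]]; exists k; split=> //; apply: ltnW.
Qed.

Lemma mkB_In E n k : k < n -> in_variety E (CmAlg k.*2.+1) ->
  List.In (CmAlg k.*2.+1) (mkB E n).
Proof.
elim: n => [//|n IH] /=; rewrite ltnS leq_eqVlt => /orP[/eqP ->|kn] Hk.
- by case: asboolP => // _; left.
- by case: asboolP => _; [right|]; apply: IH.
Qed.

Lemma nontriv (A : ockham) : subdirectly_irreducible A -> ozero A <> oone A.
Proof.
case=> a [b [nab _]] E; apply: nab.
by rewrite -(omeet1 a) -(omeet1 b) -E !omeetx0.
Qed.

Theorem theorem5p13 (E : term -> term -> Prop) :
  discriminator_variety E <->
  exists B : seq ockham,
    generated_by E B /\
    (forall A, List.In A B -> exists m : nat, odd m /\ dual_isomorphic_Cm A m).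
Proof.
split; last by case=> B [Hg HB]; apply: disc_from_gen Hg HB.
case=> t [_ Hd].
exists (mkB E (depth t).+1); split; last first.
  move=> A /In_mkB [k [_ _ ->]]; exists k.*2.+1; split.
    by rewrite /= odd_double.
  exact: CmAlg_dual.
move=> A'; split.
- move=> HA' s u Hsu v; apply: contrapT => neq.
  have [th [cth nth maxth]] := max_cong neq.
  set Q := qalg cth.
  have HQ : in_variety E Q := qvar HA'.
  have SIQ : subdirectly_irreducible Q := quot_SI cth nth maxth.
  have [k [kd [f [hf finj fsurj]]]] := classify (Hd Q HQ SIQ) (nontriv SIQ).
  have Cv : in_variety E (CmAlg k.*2.+1).
    move=> s' u' Hsu' v'.
    pose w i := sval (cid (fsurj (v' i))).
    have -> : v' = fun i => f (w i).
      by apply: funext => i; rewrite /w; case: cid.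
    by rewrite -!(hom_teval _ _ hf) (HQ _ _ Hsu').
  have HB := Hsu _ (@mkB_In E (depth t).+1 k kd Cv).
  have Qsu : satisfies Q s u.
    by move=> v0; apply: finj; rewrite !(hom_teval _ _ hf) HB.
  apply: nth; apply/(cls_eq cth).
  by rewrite -!(teval_cls cth); apply: Qsu.
- move=> HA' s u Hsu; apply: HA' => A0 /In_mkB [k [_ Hk ->]].
  exact: Hk.
Qed.
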